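(* Consider any learner in the $K$-armed bandit setting described in the context, and suppose the self-bounding condition holds with gap vector $\Delta$ and constant $C$. Then for every $x>0$ and every $z>0$, $$\mathbb{S}_1(x)\le z(\mathrm{Reg}^T+C)+\frac{1}{z}\cdot\frac{x}{4\Delta_{\min}},\qquad \mathbb{S}_2(x)\le z(\mathrm{Reg}^T+C)+\frac{1}{z}\sum_{i\in V}\frac{x}{4\Delta_i}.$$
   Context: Bandit setting: in round $t=1,\dots,T$ the learner picks $i^t\in[K]$ from a distribution $p^t$ (determined by the history before round $t$, so $\Pr[i^t=i]=\mathbb{E}[p^t_i]$), the environment picks $\ell^t\in[0,1]^K$; $\mathrm{Reg}^T=\mathbb{E}[\sum_t\ell^t_{i^t}-\sum_t\ell^t_{i^\star}]$ with $i^\star\in\arg\min_i\mathbb{E}[\sum_t\ell^t_i]$. Self-bounding condition: there exist $\Delta\in[0,1]^K$, $C\ge0$ with $\mathrm{Reg}^T\ge\mathbb{E}[\sum_{t}\sum_{i}\Pr[i^t=i]\Delta_i]-C$; $U=\{i:\Delta_i=0\}$, $V=[K]\setminus U$ (assumed nonempty), $\Delta_{\min}=\min_{i\in V}\Delta_i$. Self-bounding quantities: $\mathbb{S}_1(x)=\mathbb{E}\big[\sqrt{x\sum_{t=1}^T\sum_{i\in V}p^t_i}\big]$ and $\mathbb{S}_2(x)=\mathbb{E}\big[\sum_{i\in V}\sqrt{x\sum_{t=1}^Tp^t_i}\big]$. *)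

(* Defs.v *)
From HB Require Import structures.
From mathcomp Require Import all_boot all_order all_algebra.
From mathcomp Require Import all_classical all_reals all_analysis.
Set Implicit Arguments. Unset Strict Implicit. Unset Printing Implicit Defensive.
Import Order.TTheory GRing.Theory Num.Theory.
Local Open Scope classical_set_scope.
Local Open Scope ring_scope.
Local Open Scope ereal_scope.

Section Bandit.
Context {R : realType} {d : measure_display} {Omega : measurableType d}.
Variable (P : probability Omega R).

Definition Ex (f : Omega -> R) : \bar R := \int[P]_w (f w)%:E.

Definition Prob_arm {K : nat} (I : nat -> Omega -> 'I_K) (t : nat) (i : 'I_K)
  : \bar R := P [set w | I t w = i].

Definition Reg {K : nat} (T : nat) (I : nat -> Omega -> 'I_K)
  (ell : nat -> Omega -> 'I_K -> R) (istar : 'I_K) : \bar R :=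
  Ex (fun w => (\sum_(t < T) ell t w (I t w))%R)
  - Ex (fun w => (\sum_(t < T) ell t w istar)%R).

Definition S1 {K : nat} (T : nat) (Delta : 'I_K -> R)
  (p : nat -> Omega -> 'I_K -> R) (x : R) : \bar R :=
  Ex (fun w => Num.sqrt (x * \sum_(t < T) \sum_(i | Delta i != 0) p t w i))%R.

Definition S2 {K : nat} (T : nat) (Delta : 'I_K -> R)
  (p : nat -> Omega -> 'I_K -> R) (x : R) : \bar R :=
  Ex (fun w => \sum_(i | Delta i != 0) Num.sqrt (x * \sum_(t < T) p t w i))%R.

End Bandit.

(* Delta_min = min_{i in V} Delta_i ; since Delta_i <= 1 the neutral element 1
   is harmless when V is nonempty *)
Definition Delta_min {R : realType} {K : nat} (Delta : 'I_K -> R) : R :=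
  \big[Order.min/1%R]_(i | Delta i != 0%R) Delta i.

(* Main.v *)
Require Import Defs.
From HB Require Import structures.
From mathcomp Require Import all_boot all_order all_algebra.
From mathcomp Require Import all_classical all_reals all_analysis.
From mathcomp Require Import ring lra measurable_realfun.
Import Order.TTheory GRing.Theory Num.Theory.
Local Open Scope classical_set_scope.
Local Open Scope ring_scope.

Lemma amgm (R : realType) (a b : R) : 0 <= a -> 0 <= b ->
  Num.sqrt (4 * (a * b)) <= a + b.
Proof.
move=> ha hb.
have hab : 0 <= a + b by lra.
rewrite -[leRHS]ger0_norm // -sqrtr_sqr ler_sqrt; last by rewrite sqr_ge0.
have : 0 <= (a - b) ^+ 2 by rewrite sqr_ge0.
rewrite !expr2; nra.
Qed.

Lemma bigmin_le (R : realType) (I : eqType) (s : seq I) (P : pred I) (F : I -> R) j :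
  j \in s -> P j -> \big[Order.min/1]_(i <- s | P i) F i <= F j.
Proof.
elim: s => // a s IH; rewrite inE big_cons => /orP [/eqP <-|js] Pj.
  by rewrite Pj ge_min lexx.
case: ifP => _; last exact: IH.
by rewrite ge_min (IH js Pj) orbT.
Qed.

Lemma Delta_min_gt0 (R : realType) K (Delta : 'I_K -> R) :
  (forall i, 0 <= Delta i) -> 0 < Delta_min Delta.
Proof.
move=> h; rewrite /Delta_min; elim/big_rec: _ => // i y Di hy.
by rewrite lt_min hy andbT lt_neqAle eq_sym Di h.
Qed.

Lemma Delta_min_le (R : realType) K (Delta : 'I_K -> R) j :
  Delta j != 0 -> Delta_min Delta <= Delta j.
Proof. by move=> Dj; apply: bigmin_le => //; rewrite mem_index_enum. Qed.

Lemma Ex_le (R : realType) (d : measure_display) (Omega : measurableType d)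
  (P : probability Omega R) (f g : Omega -> R) (c : R) :
  measurable_fun setT f -> measurable_fun setT g ->
  (forall w, 0 <= f w) -> (forall w, 0 <= g w) -> 0 <= c ->
  (forall w, f w <= g w + c) -> (Ex P f <= Ex P g + c%:E)%E.
Proof.
move=> mf mg f0 g0 c0 fle; rewrite /Ex.
have -> : (c%:E = \int[P]_(w in setT) (cst c%:E) w)%E.
  rewrite integral_cst //=; have -> := probability_setT P; by rewrite mule1.
have m1 := proj2 (measurable_EFinP setT f) mf.
have m2 := proj2 (measurable_EFinP setT g) mg.
rewrite -ge0_integralD //; last 1 first.
  by move=> w _; rewrite lee_fin.
all: try (by move=> w _; rewrite lee_fin).
all: try exact: measurable_cst.
apply: ge0_le_integral => //.
- by move=> w _; rewrite lee_fin.
- by apply/emeasurable_funD => //; exact: measurable_cst.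
- by move=> w _ /=; rewrite -EFinD lee_fin.
Qed.

Lemma Ex_G (R : realType) (d : measure_display) (Omega : measurableType d)
  (P : probability Omega R) K T (p : nat -> Omega -> 'I_K -> R) (Delta : 'I_K -> R) (z : R) :
  (forall t i, measurable_fun setT (fun w => p t w i)) ->
  (forall t w i, 0 <= p t w i) -> (forall i, 0 <= Delta i) -> 0 <= z ->
  Ex P (fun w => z * \sum_(t < T) \sum_i Delta i * p t w i) =
  (z%:E * \sum_(t < T) \sum_i Ex P (fun w => p t w i) * (Delta i)%:E)%E.
Proof.
move=> mp p0 D0 z0; rewrite /Ex.
under eq_integral do rewrite EFinM.
have mS : forall t, measurable_fun setT (fun w => \sum_i Delta i * p t w i).
  move=> t; apply: measurable_sum => i.
  apply: measurable_funM; [exact: measurable_cst | exact: mp].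
have mSS : measurable_fun setT (fun w => \sum_(t < T) \sum_i Delta i * p t w i).
  by apply: measurable_sum => t; exact: mS.
rewrite (ge0_integralZl_EFin _ _ _ ((measurable_EFinP _ _).2 mSS) z0) //; last first.
  move=> w _; rewrite lee_fin; apply: sumr_ge0 => t _; apply: sumr_ge0 => i _.
  exact: mulr_ge0.
congr (_ * _)%E.
rewrite [LHS](_ : _ = (\int[P]_w (\sum_(t < T) (\sum_i Delta i * p t w i)%:E))%E); last first.
  by apply: eq_integral => w _; rewrite /= sumEFin.
rewrite ge0_integral_sum; first last.
- move=> t w _; rewrite lee_fin; apply: sumr_ge0 => i _; exact: mulr_ge0.
- by move=> t; exact: ((measurable_EFinP _ _).2 (mS t)).
- exact: measurableT.
apply: eq_bigr => t _.
rewrite [LHS](_ : _ = (\int[P]_w (\sum_i (Delta i * p t w i)%:E))%E); last first.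
  by apply: eq_integral => w _; rewrite sumEFin.
have mi : forall i, measurable_fun setT (fun w => Delta i * p t w i).
  move=> i; apply: measurable_funM; [exact: measurable_cst | exact: mp].
rewrite ge0_integral_sum; first last.
- move=> i w _; rewrite lee_fin; exact: mulr_ge0.
- by move=> i; exact: ((measurable_EFinP _ _).2 (mi i)).
- exact: measurableT.
apply: eq_bigr => i _.
under eq_integral do rewrite EFinM.
rewrite (ge0_integralZl_EFin _ _ _ ((measurable_EFinP _ _).2 (mp t i)) (D0 i)).
- by rewrite muleC.
- exact: measurableT.
- by move=> w _; rewrite lee_fin.
Qed.

Lemma measurable_sum_pred (R : realType) (d : measure_display) (Omega : measurableType d)
  (I : Type) (s : seq I) (Q : pred I) (h : I -> Omega -> R) :
  (forall i, measurable_fun setT (h i)) ->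
  measurable_fun setT (fun w => \sum_(i <- s | Q i) h i w).
Proof.
move=> mh.
rewrite (_ : (fun w => _) = fun w => \sum_(i <- s) (if Q i then h i w else 0)).
  apply: measurable_sum => i; case: (Q i) => //; exact: measurable_cst.
by apply: funext => w; rewrite big_mkcond.
Qed.

Lemma sum_V (K : nat) (R : realType) (Delta F : 'I_K -> R) :
  \sum_i Delta i * F i = \sum_(i | Delta i != 0) Delta i * F i.
Proof.
rewrite (bigID (fun i => Delta i != 0)) /= [X in _ + X]big1 ?addr0 //.
by move=> i /negPn/eqP ->; rewrite mul0r.
Qed.

Theorem lemma3 (R : realType) (d : measure_display) (Omega : measurableType d)
  (P : probability Omega R) (K T : nat)
  (p : nat -> Omega -> 'I_K -> R) (I : nat -> Omega -> 'I_K)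
  (ell : nat -> Omega -> 'I_K -> R) (istar : 'I_K)
  (Delta : 'I_K -> R) (C : R)
  (* the learner's distributions p^t are random probability vectors *)
  (hp_meas : forall t i, measurable_fun setT (fun w => p t w i))
  (hp_ge0 : forall t w i, 0 <= p t w i)
  (hp_sum : forall t w, \sum_i p t w i = 1)
  (* the played arm i^t, with Pr[i^t = i] = E[p^t_i] *)
  (hI_meas : forall t i, measurable [set w | I t w = i])
  (hI_p : forall t i, Prob_arm P I t i = Ex P (fun w => p t w i))
  (* losses in [0,1]^K *)
  (hell_meas : forall t i, measurable_fun setT (fun w => ell t w i))
  (hell01 : forall t w i, 0 <= ell t w i <= 1)
  (* i^star minimizes the expected cumulative loss *)
  (histar : forall j, (Ex P (fun w => (\sum_(t < T) ell t w istar)%R)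
                        <= Ex P (fun w => (\sum_(t < T) ell t w j)%R))%E)
  (* self-bounding condition *)
  (hDelta : forall i, 0 <= Delta i <= 1)
  (hC : 0 <= C)
  (hV : exists i, Delta i != 0)
  (hself : (Reg P T I ell istar >=
            (\sum_(t < T) \sum_i Prob_arm P I t i * (Delta i)%:E) - C%:E)%E) :
  forall x z : R, 0 < x -> 0 < z ->
    (S1 P T Delta p x <= z%:E * (Reg P T I ell istar + C%:E)
                          + (z^-1 * (x / (4 * Delta_min Delta)))%:E)%E /\
    (S2 P T Delta p x <= z%:E * (Reg P T I ell istar + C%:E)
                          + (z^-1 * \sum_(i | Delta i != 0) x / (4 * Delta i))%:E)%E.
Proof.
move=> x z x0 z0.
have D0 i : 0 <= Delta i by case/andP: (hDelta i).
set A := (\sum_(t < T) \sum_i Prob_arm P I t i * (Delta i)%:E)%E.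
set Rg := Reg P T I ell istar.
have hA : (A <= Rg + C%:E)%E.
  by rewrite -(subeK A (fin_numE C%:E)); apply: leeD2r.
have hzA : (z%:E * A <= z%:E * (Rg + C%:E))%E.
  have zE : (0%R <= z%:E)%E by rewrite lee_fin ltW.
  exact: lee_wpmul2l zE _ _ hA.
set G := fun w => \sum_(t < T) \sum_i Delta i * p t w i.
have G0 w : 0 <= G w.
  by apply: sumr_ge0 => t _; apply: sumr_ge0 => i _; exact: mulr_ge0.
have mG : measurable_fun setT G.
  apply: measurable_sum => t; apply: measurable_sum => i.
  apply: measurable_funM; [exact: measurable_cst | exact: hp_meas].
have mzG : measurable_fun setT (fun w => z * G w).
  apply: measurable_funM; [exact: measurable_cst | exact: mG].
have zG0 w : 0 <= z * G w by rewrite mulr_ge0 // ltW.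
have EG : Ex P (fun w => z * G w) = (z%:E * A)%E.
  rewrite /G Ex_G //; last exact: ltW.
  congr (_ * _)%E; apply: eq_bigr => t _; apply: eq_bigr => i _.
  by rewrite hI_p.
have msqrt := continuous_measurable_fun (@sqrt_continuous R).
split.
- have Dm0 : 0 < Delta_min Delta by apply: Delta_min_gt0.
  set Dm := Delta_min Delta.
  set c := z^-1 * (x / (4 * Dm)).
  have c0 : 0 <= c by rewrite /c; apply: mulr_ge0; rewrite ?invr_ge0 ?ltW // divr_gt0 // mulr_gt0.
  apply: le_trans; last by apply: leeD2r; exact: hzA.
  rewrite -EG; apply: Ex_le => //.
  + apply: measurableT_comp; first exact: msqrt.
    apply: measurable_funM; first exact: measurable_cst.
    apply: measurable_sum => t; apply: measurable_sum_pred => i; exact: hp_meas.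
  + move=> w.
    set S := \sum_(t < T) \sum_(i | Delta i != 0) p t w i.
    have S0 : 0 <= S by apply: sumr_ge0 => t _; apply: sumr_ge0 => i _.
    have -> : x * S = 4 * ((z * (Dm * S)) * c).
      rewrite /c; field; apply/andP; split; apply: lt0r_neq0 => //.
    apply: le_trans; first apply: amgm => //.
      by rewrite !mulr_ge0 // ltW.
    rewrite lerD2r; apply: ler_wpM2l; first exact: ltW.
    rewrite /S mulr_sumr /G; apply: ler_sum => t _.
    rewrite sum_V mulr_sumr; apply: ler_sum => i Vi.
    by apply: ler_wpM2r => //; exact: Delta_min_le.
- set c := z^-1 * \sum_(i | Delta i != 0) x / (4 * Delta i).
  have Dp i : Delta i != 0 -> 0 < Delta i by move=> h; rewrite lt_neqAle eq_sym h D0.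
  have c0 : 0 <= c.
    rewrite /c; apply: mulr_ge0; first by rewrite invr_ge0 ltW.
    apply: sumr_ge0 => i Vi; apply: divr_ge0; first exact: ltW.
    by rewrite mulr_ge0 // ltW // Dp.
  apply: le_trans; last by apply: leeD2r; exact: hzA.
  rewrite -EG; apply: Ex_le => //.
  + apply: measurable_sum_pred => i.
    apply: measurableT_comp; first exact: msqrt.
    apply: measurable_funM; first exact: measurable_cst.
    apply: measurable_sum => t; exact: hp_meas.
  + by move=> w; apply: sumr_ge0 => i _; exact: sqrtr_ge0.
  + move=> w.
    have -> : z * G w = \sum_(i | Delta i != 0) z * (Delta i * \sum_(t < T) p t w i).
      rewrite -mulr_sumr; congr (_ * _).
      rewrite /G exchange_big /= -sum_V; apply: eq_bigr => i _.
      by rewrite mulr_sumr.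
    rewrite /c mulr_sumr -big_split /=; apply: ler_sum => i Vi.
    set S := \sum_(t < T) p t w i.
    have S0 : 0 <= S by apply: sumr_ge0 => t _.
    have -> : x * S = 4 * ((z * (Delta i * S)) * (z^-1 * (x / (4 * Delta i)))).
      field; apply/andP; split; apply: lt0r_neq0 => //; exact: Dp.
    apply: amgm; first by rewrite !mulr_ge0 // ltW // Dp.
    apply: mulr_ge0; first by rewrite invr_ge0 ltW.
    by apply: divr_ge0; [exact: ltW | rewrite mulr_ge0 // ltW // Dp].
Qed.
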